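(* Let $f:\mathbb{R}^n\to\mathbb{R}$ be differentiable, $L$-smooth and $m$-strongly convex with $m>0$, and let $x_*$ be the unique point with $\nabla f(x_* )=0$. Let $0<\mu<2$, $\delta>0$, $\alpha>0$, $\eta>0$ and constants $0<c_1\le c_2<+\infty$. Consider the adaptive fractional order accelerated gradient descent (AFOAGD) iteration $$x_{k+1}=y_k-\alpha\,\nabla f(y_k)\,\beta_k\,(\|y_k-y_{k-1}\|_2+\delta)^{1-\mu},\qquad y_k=x_k+\eta(x_k-x_{k-1}),$$ where the scalars $\beta_k>0$ satisfy $0<c_1\le \beta_k(\|y_k-y_{k-1}\|_2+\delta)^{1-\mu}\le c_2<+\infty$ for all $k$. Set $u_k=\nabla f(y_k)\,\beta_k(\|y_k-y_{k-1}\|_2+\delta)^{1-\mu}$, $u_*=0$, and $$e_k=\big[(x_{k-1}-x_* )^\top,\ (x_k-x_* )^\top,\ (u_k-u_* )^\top\big]^\top\in\mathbb{R}^{3n}.$$ Then for all trajectories and all $k$, $$f(x_{k+1})-f(x_* )\le e_k^\top N^1 e_k,$$ where $$N^1=\begin{bmatrix}-\frac{\eta^2 m}{2}I_n & \frac{\eta(\eta+1)m}{2}I_n & -\frac{\eta}{2c_1}I_n\\ \frac{\eta(\eta+1)m}{2}I_n & -\frac{(\eta+1)^2 m}{2}I_n & \frac{\eta+1}{2c_1}I_n\\ -\frac{\eta}{2c_1}I_n & \frac{\eta+1}{2c_1}I_n & \left(\frac12\alpha^2L-\frac{\alpha}{c_2}\right)I_n\end{bmatrix}.$$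
   Context: A differentiable $f$ is $L$-smooth if $\|\nabla f(x)-\nabla f(y)\|_2\le L\|x-y\|_2$ for all $x,y$, and $m$-strongly convex if $m\|x-y\|_2^2\le (x-y)^\top(\nabla f(x)-\nabla f(y))$ for all $x,y$. $I_n$ is the $n\times n$ identity matrix. *)

(* Defs.v *)
From HB Require Import structures.
From mathcomp Require Import all_boot all_order all_algebra.
From mathcomp Require Import all_classical all_reals all_analysis.
Set Implicit Arguments. Unset Strict Implicit. Unset Printing Implicit Defensive.
Import Order.TTheory GRing.Theory Num.Theory.
Import numFieldNormedType.Exports.
Local Open Scope ring_scope.

Definition dotv {R : realType} {n : nat} (u v : 'rV[R]_n) : R :=
  \sum_(i < n) u ord0 i * v ord0 i.

Definition norm2 {R : realType} {n : nat} (v : 'rV[R]_n) : R :=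
  Num.sqrt (dotv v v).

Definition is_gradient {R : realType} {n : nat}
  (f : 'rV[R]_n -> R) (g : 'rV[R]_n -> 'rV[R]_n) : Prop :=
  forall x, differentiable f x /\ forall h, 'd f x h = dotv (g x) h.

Definition L_smooth {R : realType} {n : nat} (g : 'rV[R]_n -> 'rV[R]_n) (L : R) :=
  forall x y, norm2 (g x - g y) <= L * norm2 (x - y).

Definition strongly_convex {R : realType} {n : nat} (g : 'rV[R]_n -> 'rV[R]_n) (m : R) :=
  forall x y, m * norm2 (x - y) ^+ 2 <= dotv (x - y) (g x - g y).

Definition N1 {R : realType} (n : nat) (m L alpha eta c1 c2 : R)
  : 'M[R]_(n + (n + n)) :=
  let a11 : 'M[R]_n := (- (eta ^+ 2 * m / 2))%:M in
  let a12 : 'M[R]_n := (eta * (eta + 1) * m / 2)%:M in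
  let a13 : 'M[R]_n := (- (eta / (2 * c1)))%:M in
  let a22 : 'M[R]_n := (- ((eta + 1) ^+ 2 * m / 2))%:M in
  let a23 : 'M[R]_n := ((eta + 1) / (2 * c1))%:M in
  let a33 : 'M[R]_n := (alpha ^+ 2 * L / 2 - alpha / c2)%:M in
  block_mx a11 (row_mx a12 a13)
           (col_mx a12 a13) (block_mx a22 a23 a23 a33).

Definition err_vec {R : realType} {n : nat} (a b c : 'rV[R]_n) : 'cV[R]_(n + (n + n)) :=
  col_mx a^T (col_mx b^T c^T).

Definition qform {R : realType} {p : nat} (N : 'M[R]_p) (e : 'cV[R]_p) : R :=
  (e^T *m N *m e) ord0 ord0.

(* Main.v *)
Require Import Defs.
From HB Require Import structures.
From mathcomp Require Import all_boot all_order all_algebra.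
From mathcomp Require Import all_classical all_reals all_analysis.
From mathcomp Require Import ring lra.
Import Order.TTheory GRing.Theory Num.Theory.
Import numFieldNormedType.Exports.
Local Open Scope ring_scope.

Section S.
Context {R : realType} {n : nat}.
Implicit Types (a b c : 'rV[R]_n).
Lemma dotvC a b : dotv a b = dotv b a.
Proof. by rewrite /dotv; apply: eq_bigr => i _; rewrite mulrC. Qed.
Lemma dotvDl a b c : dotv (a + b) c = dotv a c + dotv b c.
Proof. by rewrite /dotv -big_split; apply: eq_bigr => i _; rewrite mxE mulrDl. Qed.
Lemma dotvNl a c : dotv (- a) c = - dotv a c.
Proof. by rewrite /dotv -sumrN; apply: eq_bigr => i _; rewrite mxE mulNr. Qed.
Lemma dotvBl a b c : dotv (a - b) c = dotv a c - dotv b c.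
Proof. by rewrite dotvDl dotvNl. Qed.
Lemma dotvZl (z : R) a c : dotv (z *: a) c = z * dotv a c.
Proof. by rewrite /dotv mulr_sumr; apply: eq_bigr => i _; rewrite mxE mulrA. Qed.
Lemma dotvDr a b c : dotv c (a + b) = dotv c a + dotv c b.
Proof. by rewrite !(dotvC c) dotvDl. Qed.
Lemma dotvBr a b c : dotv c (a - b) = dotv c a - dotv c b.
Proof. by rewrite !(dotvC c) dotvBl. Qed.
Lemma dotvZr (z : R) a c : dotv c (z *: a) = z * dotv c a.
Proof. by rewrite !(dotvC c) dotvZl. Qed.
Lemma dotvNr a c : dotv c (- a) = - dotv c a.
Proof. by rewrite !(dotvC c) dotvNl. Qed.
Lemma dotv0l c : dotv 0 c = 0.
Proof. by rewrite /dotv big1 // => i _; rewrite mxE mul0r. Qed.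
Lemma dotv_ge0 a : 0 <= dotv a a.
Proof. by rewrite /dotv sumr_ge0 // => i _; rewrite -expr2 sqr_ge0. Qed.
Lemma norm2_sq a : norm2 a ^+ 2 = dotv a a.
Proof. by rewrite /norm2 sqr_sqrtr // dotv_ge0. Qed.
Lemma norm2_ge0 a : 0 <= norm2 a.
Proof. exact: sqrtr_ge0. Qed.
Lemma dotv_eq0 a : dotv a a = 0 -> a = 0.
Proof.
move=> /eqP; rewrite /dotv psumr_eq0; last by move=> i _; rewrite -expr2 sqr_ge0.
move=> /allP H; apply/rowP => i; rewrite mxE.
have := H i (mem_index_enum i); rewrite -expr2 => /implyP /(_ isT).
by rewrite sqrf_eq0 => /eqP.
Qed.
Lemma cauchy_schwarz a b : dotv a b <= norm2 a * norm2 b.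
Proof.
set A := norm2 a; set B := norm2 b.
have HA : 0 <= A by exact: norm2_ge0.
have HB : 0 <= B by exact: norm2_ge0.
have H := dotv_ge0 (B *: a - A *: b).
rewrite !(dotvBl, dotvBr, dotvZl, dotvZr) -!norm2_sq -/A -/B (dotvC b a) in H.
have [AB0|ABp] := eqVneq (A * B) 0.
  move/eqP: (AB0); rewrite mulf_eq0 => /orP[]/eqP H0.
    have : dotv a a = 0 by rewrite -norm2_sq -/A H0 expr2 mul0r.
    by move/dotv_eq0 => ->; rewrite dotv0l mulr_ge0.
  have : dotv b b = 0 by rewrite -norm2_sq -/B H0 expr2 mul0r.
  by move/dotv_eq0 => ->; rewrite dotvC dotv0l mulr_ge0.
have ABg : 0 < A * B by rewrite lt0r ABp mulr_ge0.
nra.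
Qed.

Lemma dotv_mx a b : (a *m b^T) ord0 ord0 = dotv a b.
Proof. by rewrite !mxE; apply: eq_bigr => i _; rewrite mxE. Qed.

Lemma norm2Z (s : R) a : 0 <= s -> norm2 (s *: a) = s * norm2 a.
Proof.
move=> s0; rewrite /norm2 dotvZl dotvZr mulrA -expr2 sqrtrM ?sqr_ge0 //.
by rewrite sqrtr_sqr ger0_norm.
Qed.
End S.
Lemma phi_derive (R : realType) (n : nat) (f : 'rV[R]_n -> R) g (y d : 'rV[R]_n) (t : R) :
  is_gradient f g ->
  is_derive t 1 (fun s : R => f (y + s *: d)) (dotv (g (y + t *: d)) d).
Proof.
move=> hg; have [df dfE] := hg (y + t *: d).
have E : (fun h : R => h^-1 *: (((fun s : R => f (y + s *: d)) \o shift t) (h *: 1) - f (y + t *: d)))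
       = (fun h : R => h^-1 *: ((f \o shift (y + t *: d)) (h *: d) - f (y + t *: d))).
  apply: funext => h /=; congr (_ *: (f _ - _)).
  by rewrite /shift /= [h *: 1]mulr1 scalerDl addrCA addrA.
split.
  by rewrite /derivable E; apply: diff_derivable.
rewrite /derive E -/(derive f (y + t *: d) d) deriveE //.
Qed.

Lemma mvt_quad (R : realType) (phi dphi : R -> R) (c Q : R) :
  (forall s : R, is_derive s (1:R) phi (dphi s)) ->
  (forall s, 0 < s < 1 -> dphi s - c <= Q * s) ->
  phi 1 - phi 0 <= c + Q / 2.
Proof.
move=> hd hb.
pose psi := phi - (fun s => c * s) - (fun s => Q / 2 * (s * s)).
have dpsi (s : R) : is_derive s (1:R) psi (dphi s - c - Q * s).
  have h1 := hd s.
  have h2 : is_derive s (1:R) (cst c * id) (cst c s *: 1 + id s *: 0).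
    exact: is_deriveM.
  have h3 : is_derive s (1:R) (cst (Q/2) * (id * id)) (cst (Q/2) s *: (id s *: 1 + id s *: 1) + (id * id) s *: 0).
    by apply: is_deriveM; apply: is_deriveM.
  have := is_deriveB (is_deriveB h1 h2) h3.
  move/is_derive_eq; apply.
  rewrite /= /GRing.scale /= !mulr1 !mulr0 !addr0. congr (_ - _). rewrite -mulr2n mulrnAr -mulr_natr mulrAC divfK // pnatr_eq0.
have [] := @MVT R psi (fun s => dphi s - c - Q * s) 0 1 ltr01 (fun s _ => dpsi s).
  apply: derivable_within_continuous => s _; exact: (dpsi s).(ex_derive).
move=> xi; rewrite in_itv /= => hxi; rewrite /psi /= subr0 mulr1 => E.
have := hb xi hxi; move: E.
  change (phi 1 - c*1 - Q/2*(1*1) - (phi 0 - c*0 - Q/2*(0*0)) = dphi xi - c - Q * xi -> dphi xi - c <= Q * xi -> phi 1 - phi 0 <= c + Q / 2).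
  rewrite !mulr0 !mulr1 !subr0. lra.
Qed.

Lemma eqle (R : realType) (a b : R) : a = b -> a <= b.
Proof. by move=> ->. Qed.

Lemma descent (R : realType) (n : nat) (f : 'rV[R]_n -> R) g (L : R) (y d : 'rV[R]_n) :
  is_gradient f g -> L_smooth g L ->
  f (y + d) <= f y + dotv (g y) d + L / 2 * dotv d d.
Proof.
move=> hg hL.
have := @mvt_quad R (fun s => f (y + s *: d)) (fun s => dotv (g (y + s *: d)) d)
  (dotv (g y) d) (L * dotv d d) (fun s => @phi_derive R n f g y d s hg).
rewrite /= scale1r scale0r addr0.
have -> : L * dotv d d / 2 = L / 2 * dotv d d by rewrite mulrAC.
have H : forall s : R, 0 < s < 1 ->
    dotv (g (y + s *: d)) d - dotv (g y) d <= L * dotv d d * s.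
  move=> s /andP[s0 s1]; rewrite -dotvBl.
  apply: le_trans (cauchy_schwarz _ _) _.
  have := hL (y + s *: d) y; rewrite addrAC subrr add0r (norm2Z _ _ (ltW s0)) => h.
  apply: le_trans (ler_wpM2r (norm2_ge0 _) h) _.
  by rewrite -norm2_sq; apply: eqle; ring.
move/(_ H); lra.
Qed.

Lemma sconv (R : realType) (n : nat) (f : 'rV[R]_n -> R) g (m : R) (y d : 'rV[R]_n) :
  is_gradient f g -> strongly_convex g m ->
  f y + dotv (g y) d + m / 2 * dotv d d <= f (y + d).
Proof.
move=> hg hm.
have hd s : is_derive s (1:R) (fun s => - f (y + s *: d)) (- dotv (g (y + s *: d)) d).
  exact: (is_deriveN (@phi_derive R n f g y d s hg)).
have := @mvt_quad R (fun s => - f (y + s *: d)) (fun s => - dotv (g (y + s *: d)) d)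
  (- dotv (g y) d) (- (m * dotv d d)) hd.
rewrite /= scale1r scale0r addr0.
have H : forall s : R, 0 < s < 1 ->
    - dotv (g (y + s *: d)) d - - dotv (g y) d <= - (m * dotv d d) * s.
  move=> s /andP[s0 s1].
  have := hm (y + s *: d) y; rewrite addrAC subrr add0r (norm2Z _ _ (ltW s0)) dotvZl dotvC dotvBl.
  rewrite exprMn norm2_sq => h.
  have : s * (m * dotv d d * s) <= s * (dotv (g (y + s *: d)) d - dotv (g y) d).
    by apply: le_trans h; apply: eqle; ring.
  rewrite ler_pM2l // => h2; lra.
move/(_ H).
have -> : - (m * dotv d d) / 2 = - (m / 2 * dotv d d) by rewrite mulNr mulrAC.
lra.
Qed.
Lemma madd (R : realType) p q (A B : 'M[R]_(p,q)) i j : (A + B) i j = A i j + B i j.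
Proof. by rewrite mxE. Qed.
Lemma mscale (R : realType) p q (z : R) (A : 'M[R]_(p,q)) i j : (z *: A) i j = z * A i j.
Proof. by rewrite mxE. Qed.

Lemma qformE (R : realType) (n : nat) (m L alpha eta c1 c2 : R) (a b c : 'rV[R]_n) :
  qform (N1 n m L alpha eta c1 c2) (err_vec a b c) =
  - (eta ^+ 2 * m / 2) * dotv a a + 2 * (eta * (eta + 1) * m / 2) * dotv a b
  + 2 * (- (eta / (2 * c1))) * dotv a c - ((eta + 1) ^+ 2 * m / 2) * dotv b b
  + 2 * ((eta + 1) / (2 * c1)) * dotv b c + (alpha ^+ 2 * L / 2 - alpha / c2) * dotv c c.
Proof.
rewrite /qform /N1 /err_vec /= !tr_col_mx !trmxK.
rewrite !mul_row_block !mul_row_col !mul_mx_scalar.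
rewrite !mulmxDl -!scalemxAl !mul_mx_row !mul_row_col !mul_mx_scalar -!scalemxAl.
rewrite !madd !mscale !dotv_mx ?(dotvC b a) ?(dotvC c a) ?(dotvC c b) !dotvDl !dotvZl (dotvC c b).
ring.
Qed.
Theorem lemma1 (R : realType) (n : nat)
  (f : 'rV[R]_n -> R) (g : 'rV[R]_n -> 'rV[R]_n) (L m : R) (xs : 'rV[R]_n)
  (mu delta alpha eta c1 c2 : R)
  (x y : nat -> 'rV[R]_n) (beta : nat -> R) :
  is_gradient f g ->
  L_smooth g L ->
  strongly_convex g m ->
  0 < m ->
  g xs = 0 ->
  0 < mu -> mu < 2 -> 0 < delta -> 0 < alpha -> 0 < eta ->
  0 < c1 -> c1 <= c2 ->
  (forall k, (0 < k)%N -> y k = x k + eta *: (x k - x k.-1)) ->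
  (forall k, (0 < k)%N ->
     x k.+1 = y k - alpha *: (beta k * (norm2 (y k - y k.-1) + delta) `^ (1 - mu)) *: g (y k)) ->
  (forall k, (0 < k)%N -> 0 < beta k) ->
  (forall k, (0 < k)%N ->
     c1 <= beta k * (norm2 (y k - y k.-1) + delta) `^ (1 - mu) <= c2) ->
  forall k, (0 < k)%N ->
    let u_k := (beta k * (norm2 (y k - y k.-1) + delta) `^ (1 - mu)) *: g (y k) in
    let u_s : 'rV[R]_n := 0 in
    f (x k.+1) - f xs
      <= qform (N1 n m L alpha eta c1 c2) (err_vec (x k.-1 - xs) (x k - xs) (u_k - u_s)).
Proof.
move=> hg hL hm m0 gxs0 mu0 mu2 del0 al0 eta0 c10 c12 hy hx hb hs k k0 /=.
rewrite subr0.
move: (hx k k0) (hs k k0) (hy k k0).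
set s := beta k * _.
set yk := y k => hxk /andP[s1 s2] hyk.
set G := g yk.

have hxk' : x k.+1 = yk + (- (alpha * s)) *: G.
  by rewrite hxk scaleNr.
set a := x k.-1 - xs; set b := x k - xs.
set w := yk - xs.
have hw : w = (1 + eta) *: b - eta *: a.
  by rewrite /w /a /b hyk; apply/rowP => i; rewrite !mxE; ring.

set W := dotv w w; set P := dotv w G; set Q := dotv G G.
have hD := @descent R n f g L yk (- (alpha * s) *: G) hg hL.
rewrite -hxk' !dotvZl !dotvZr -/Q in hD.
have hS := @sconv R n f g m yk (xs - yk) hg hm.
have e1 : xs - yk = - w by rewrite /w opprB.
have e2 : yk - w = xs by rewrite /w opprB addrCA subrr addr0.
rewrite e1 -/G e2 !dotvNl !dotvNr opprK -/W (dotvC G) -/P in hS.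
have hM := hm yk xs; rewrite -/G gxs0 subr0 -/w norm2_sq -/W in hM.
have W0 : 0 <= W by exact: dotv_ge0.
have Q0 : 0 <= Q by exact: dotv_ge0.
have P0 : 0 <= P by exact: le_trans (mulr_ge0 (ltW m0) W0) hM.
clearbody a b.
have E : qform (N1 n m L alpha eta c1 c2) (err_vec a b (s *: G)) =
    - (m / 2) * W + (s * P) / c1 + (alpha ^+ 2 * L / 2 - alpha / c2) * (s ^+ 2 * Q).
  rewrite qformE /W /P /Q hw !(dotvDl, dotvBl, dotvZl, dotvDr, dotvBr, dotvZr, dotvNl, dotvNr) ?(dotvC b a) ?(dotvC G a) ?(dotvC G b).
  field. by rewrite !gt_eqF // (lt_le_trans c10 c12).
rewrite E.
have c20 : 0 < c2 by exact: lt_le_trans c10 c12.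
have s0 : 0 < s by exact: lt_le_trans c10 s1.
have h1 : P <= s * P / c1.
  rewrite ler_pdivlMr // mulrC ler_wpM2r //.
have h2 : alpha / c2 * (s ^+ 2 * Q) <= alpha * s * Q.
  rewrite mulrAC ler_pdivrMr //.
  rewrite (_ : alpha * (s ^+ 2 * Q) = (alpha * s * Q) * s); last by ring.
  apply: ler_wpM2l => //; exact: mulr_ge0 (mulr_ge0 (ltW al0) (ltW s0)) Q0.
have e3 : L / 2 * (- (alpha * s) * (- (alpha * s) * Q)) = alpha ^+ 2 * L / 2 * (s ^+ 2 * Q).
  ring.
rewrite e3 in hD.
move: hD hS h1 h2; set A1 := alpha ^+ 2 * L / 2 * (s ^+ 2 * Q).
set A2 := alpha / c2 * (s ^+ 2 * Q); set A3 := s * P / c1.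
have -> : - (alpha * s) * Q = - (alpha * s * Q) by rewrite mulNr.
set A4 := alpha * s * Q.
have -> : (alpha ^+ 2 * L / 2 - alpha / c2) * (s ^+ 2 * Q) = A1 - A2 by rewrite /A1 /A2; ring.
have -> : - (m / 2) * W = - (m / 2 * W) by rewrite mulNr.
set A5 := m / 2 * W.
lra.
Qed.
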